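(* Let $\kappa\in(0,1)$, $\tau>0$, $\Omega\in\mathbb{R}\setminus\{0\}$ and $W>0$ be independent parameters, and let $\Psi(P)=1$ if $|P|<W$ and $\Psi(P)=0$ otherwise. Consider the eigenvalue problem $$\tau\lambda\,Z(P)=\tau\Omega\,Z'(P)-Z(P)+\kappa^{-1}\Psi(P)Z(P)-\kappa^{-1}\int_{-\infty}^{\infty}\Psi(Q)Z(Q)\,dQ,\qquad P\in\mathbb{R},$$ for $\lambda\in\mathbb{C}$ and $Z:\mathbb{R}\to\mathbb{C}$ continuous, growing at most linearly, and satisfying the equation on $\mathbb{R}\setminus\{-W,W\}$. Call $\lambda$ an eigenvalue if there is a nontrivial such $Z$. Then: (i) A complex number $\lambda$ with $\operatorname{Re}(\tau\lambda)<-1$ is an eigenvalue if and only if $$\exp\Big(\frac{\kappa\tau\lambda+\kappa-1}{\kappa\tau|\Omega|}\,2W\Big)-1=\frac{(\kappa\tau\lambda+\kappa)(\kappa\tau\lambda+\kappa-1)(\kappa\tau\lambda+\kappa-1+2W)}{\kappa\tau|\Omega|}.$$ (ii) For every $\lambda\in\mathbb{C}$ with $\operatorname{Re}(\tau\lambda)=-1$ there exists a corresponding eigenfunction. (iii) A complex number $\lambda$ with $\operatorname{Re}(\tau\lambda)>-1$ is an eigenvalue if and only if both $$1-\exp\Big(-\frac{\kappa\tau\lambda+\kappa-1}{\kappa\tau|\Omega|}\,2W\Big)=\frac{(\kappa\tau\lambda+\kappa)(\kappa\tau\lambda+\kappa-1)(\kappa\tau\lambda+\kappa-1+2W)}{\kappa\tau|\Omega|}$$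 and $\tau\lambda\neq(1-\kappa)/\kappa$ hold. Moreover, all eigenvalues in the cases (i) and (iii) are simple and have bounded eigenfunctions.
   Context: This eigenvalue problem is the linearization, in a comoving frame $P=p-\tfrac12(\Xi_-+\Xi_+)-\Omega t$ with $z(t,p)=e^{\lambda t}Z(P)$, of the mean-field particle dynamics $\tau\partial_t x=\sigma(t)+\delta(p-\tfrac12)-H'(x)$ (with trilinear $H'$ having spinodal region $[-\kappa,\kappa]$) around a traveling wave of speed $\Omega$ whose spinodal stripe has half width $W$. In this statement, however, $W$ is not required to satisfy any traveling-wave relation. The set in (ii) is called the continuous spectrum. *)

(* Defs.v *)
From Stdlib Require Import Reals.
From Coquelicot Require Export Coquelicot.
Export Rdefinitions.
Open Scope R_scope.

Definition Cexp (z : C) : C :=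
  (exp (Re z) * cos (Im z), exp (Re z) * sin (Im z)).

Definition Psi (W P : R) : R := if Rlt_dec (Rabs P) W then 1 else 0.

(* Since Psi is the indicator of (-W,W), int_R Psi Z = int_{-W}^{W} Z. *)
Definition eig_solution (kappa tau Omega W : R) (lam : C) (Z : R -> C) : Prop :=
  (forall P, continuous Z P) /\
  (exists K : R, forall P, Cmod (Z P) <= K * (1 + Rabs P)) /\
  exists I : C, is_RInt Z (- W) W I /\
  forall P, P <> W -> P <> - W ->
    exists dZ : C, is_derive Z P dZ /\
      (RtoC tau * lam * Z P =
       RtoC (tau * Omega) * dZ - Z P + RtoC (/ kappa * Psi W P) * Z P
       - RtoC (/ kappa) * I)%C.

Definition eigenfunction kappa tau Omega W lam (Z : R -> C) : Prop :=
  eig_solution kappa tau Omega W lam Z /\ exists P, Z P <> RtoC 0.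

Definition is_eigenvalue kappa tau Omega W (lam : C) : Prop :=
  exists Z, eigenfunction kappa tau Omega W lam Z.

(* simple: the solution space is one-dimensional (geometric simplicity) *)
Definition simple_eigenvalue kappa tau Omega W (lam : C) : Prop :=
  exists Z0, eigenfunction kappa tau Omega W lam Z0 /\
   forall Z, eig_solution kappa tau Omega W lam Z ->
     exists c : C, forall P, Z P = (c * Z0 P)%C.

Definition bounded_fun (Z : R -> C) : Prop :=
  exists M : R, forall P, Cmod (Z P) <= M.

Definition char_rhs kappa tau Omega W (lam : C) : C :=
  ((RtoC kappa * RtoC tau * lam + RtoC kappa)
   * (RtoC kappa * RtoC tau * lam + RtoC kappa - RtoC 1)
   * (RtoC kappa * RtoC tau * lam + RtoC kappa - RtoC 1 + RtoC (2 * W))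
   / RtoC (kappa * tau * Rabs Omega))%C.

Definition char_arg kappa tau Omega W (lam : C) : C :=
  ((RtoC kappa * RtoC tau * lam + RtoC kappa - RtoC 1)
   / RtoC (kappa * tau * Rabs Omega) * RtoC (2 * W))%C.

(* Main.v *)
Require Import Defs.
From Stdlib Require Import Reals Lra Lia Psatz Field Classical.
From Coquelicot Require Import Coquelicot.
Open Scope R_scope.

Lemma C_deriv_fst (f : R -> C) x l :
  is_derive f x l -> is_derive (fun t => fst (f t)) x (fst l).
Proof.
  intros H. unfold is_derive in *.
  eapply filterdiff_ext_lin.
  - apply (filterdiff_comp f (fun c : C_R_NormedModule => fst c) _ (fun c : C_R_NormedModule => fst c) H).
    apply filterdiff_linear. apply (@is_linear_fst R_AbsRing R_NormedModule R_NormedModule).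
  - intros y. reflexivity.
Qed.

Lemma C_deriv_snd (f : R -> C) x l :
  is_derive f x l -> is_derive (fun t => snd (f t)) x (snd l).
Proof.
  intros H. unfold is_derive in *.
  eapply filterdiff_ext_lin.
  - apply (filterdiff_comp f (fun c : C_R_NormedModule => snd c) _ (fun c : C_R_NormedModule => snd c) H).
    apply filterdiff_linear. apply (@is_linear_snd R_AbsRing R_NormedModule R_NormedModule).
  - intros y. reflexivity.
Qed.

Lemma C_deriv_pair (f1 f2 : R -> R) x l1 l2 :
  is_derive f1 x l1 -> is_derive f2 x l2 ->
  is_derive (fun t => (f1 t, f2 t) : C) x (l1, l2).
Proof.
  intros H1 H2. unfold is_derive in *.
  eapply filterdiff_ext_lin.
  - apply (filterdiff_comp'_2 (K := R_AbsRing) (W := C_R_NormedModule) f1 f2 (fun a b => (a, b)) x _ _ (fun a b => (a,b)) H1 H2).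
    apply filterdiff_linear.
    apply (is_linear_prod (K := R_AbsRing) (T := prod_NormedModule R_AbsRing R_NormedModule R_NormedModule)).
    apply is_linear_fst. apply is_linear_snd.
  - intros y. reflexivity.
Qed.

Lemma C_deriv_comp (f : R -> C) x l :
  is_derive (fun t => fst (f t)) x (fst l) ->
  is_derive (fun t => snd (f t)) x (snd l) -> is_derive f x l.
Proof.
  intros H1 H2.
  apply (is_derive_ext (fun t => (fst (f t), snd (f t)) : C)).
  { intros t. destruct (f t); reflexivity. }
  destruct l as [l1 l2]. now apply C_deriv_pair.
Qed.

Lemma is_derive_eq {V : NormedModule R_AbsRing} (f : R -> V) x l l' :
  is_derive f x l -> l = l' -> is_derive f x l'.
Proof. intros H ->; exact H. Qed.

Lemma C_deriv_mult (f g : R -> C) x lf lg :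
  is_derive f x lf -> is_derive g x lg ->
  is_derive (fun t => (f t * g t)%C) x (lf * g x + f x * lg)%C.
Proof.
  intros Hf Hg.
  pose proof (C_deriv_fst _ _ _ Hf) as Hf1. pose proof (C_deriv_snd _ _ _ Hf) as Hf2.
  pose proof (C_deriv_fst _ _ _ Hg) as Hg1. pose proof (C_deriv_snd _ _ _ Hg) as Hg2.
  apply C_deriv_comp; simpl.
  - eapply is_derive_eq.
    apply (is_derive_minus _ _ _ _ _ (is_derive_mult _ _ _ _ _ Hf1 Hg1 Rmult_comm)
        (is_derive_mult _ _ _ _ _ Hf2 Hg2 Rmult_comm)).
    unfold minus, plus, opp, mult; simpl. ring.
  - eapply is_derive_eq.
    apply (is_derive_plus _ _ _ _ _ (is_derive_mult _ _ _ _ _ Hf1 Hg2 Rmult_comm)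
        (is_derive_mult _ _ _ _ _ Hf2 Hg1 Rmult_comm)).
    unfold minus, plus, opp, mult; simpl. ring.
Qed.

Lemma C_deriv_plus (f g : R -> C) x lf lg :
  is_derive f x lf -> is_derive g x lg ->
  is_derive (fun t => (f t + g t)%C) x (lf + lg)%C.
Proof.
  intros Hf Hg.
  pose proof (C_deriv_fst _ _ _ Hf) as Hf1. pose proof (C_deriv_snd _ _ _ Hf) as Hf2.
  pose proof (C_deriv_fst _ _ _ Hg) as Hg1. pose proof (C_deriv_snd _ _ _ Hg) as Hg2.
  apply C_deriv_comp; simpl.
  - eapply is_derive_eq. apply (is_derive_plus _ _ _ _ _ Hf1 Hg1). reflexivity.
  - eapply is_derive_eq. apply (is_derive_plus _ _ _ _ _ Hf2 Hg2). reflexivity.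
Qed.

Lemma C_deriv_const (a : C) (x : R) : is_derive (fun _ : R => a) x (RtoC 0).
Proof.
  apply C_deriv_comp; simpl; apply (is_derive_const (K := R_AbsRing) (V := R_NormedModule)).
Qed.

Lemma C_deriv_lin (a b : C) (x : R) : is_derive (fun t => (a * RtoC t + b)%C) x a.
Proof.
  apply C_deriv_comp; simpl.
  - auto_derive; [exact I| ring].
  - auto_derive; [exact I| ring].
Qed.

Lemma Cexp_deriv (c : C) (p x : R) :
  is_derive (fun t => Cexp (c * RtoC (t - p))) x (c * Cexp (c * RtoC (x - p)))%C.
Proof.
  destruct c as [a b].
  apply C_deriv_comp; unfold Cexp, Re, Im; simpl.
  - auto_derive; [exact I| unfold Rminus; ring].
  - auto_derive; [exact I| unfold Rminus; ring].
Qed.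

Lemma C_cont_fst (f : R -> C) x : continuous f x -> Ranalysis1.continuity_pt (fun t => fst (f t)) x.
Proof.
  intros H. apply continuity_pt_filterlim.
  apply (continuous_comp f (fun c : C => fst c)). exact H.
  destruct (f x). apply continuous_fst.
Qed.

Lemma C_cont_snd (f : R -> C) x : continuous f x -> Ranalysis1.continuity_pt (fun t => snd (f t)) x.
Proof.
  intros H. apply continuity_pt_filterlim.
  apply (continuous_comp f (fun c : C => snd c)). exact H.
  destruct (f x). apply continuous_snd.
Qed.

Lemma C_const (g : R -> C) a b :
  (forall x, Rmin a b < x < Rmax a b -> is_derive g x (RtoC 0)) ->
  (forall x, Rmin a b <= x <= Rmax a b -> continuous g x) -> g a = g b.
Proof.
  intros Hd Hc.
  destruct (MVT_gen (fun t => fst (g t)) a b (fun _ => 0)) as [c1 [_ E1]].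
  { intros x Hx. apply (C_deriv_fst g x (RtoC 0) (Hd x Hx)). }
  { intros x Hx. apply C_cont_fst, Hc, Hx. }
  destruct (MVT_gen (fun t => snd (g t)) a b (fun _ => 0)) as [c2 [_ E2]].
  { intros x Hx. apply (C_deriv_snd g x (RtoC 0) (Hd x Hx)). }
  { intros x Hx. apply C_cont_snd, Hc, Hx. }
  simpl in E1, E2. destruct (g a), (g b). simpl in *. f_equal; lra.
Qed.

Lemma is_deriveC_eq (f : R -> C) (x : R) (l l' : C) :
  is_derive f x l -> l = l' -> is_derive f x l'.
Proof. intros H ->; exact H. Qed.

Definition Ccont (f : R -> C) x :=
  continuity_pt (fun t => fst (f t)) x /\ continuity_pt (fun t => snd (f t)) x.

Lemma Ccont_of_cont f x : continuous f x -> Ccont f x.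
Proof. intros H; split; [apply C_cont_fst|apply C_cont_snd]; exact H. Qed.

Lemma cont_of_deriv (f : R -> R) x l : is_derive f x l -> continuity_pt f x.
Proof.
  intros H. apply continuity_pt_filterlim. apply (ex_derive_continuous f x). exists l; exact H.
Qed.

Lemma Ccont_of_deriv f x l : is_derive f x l -> Ccont f x.
Proof.
  intros H; split; eapply cont_of_deriv; [apply C_deriv_fst|apply C_deriv_snd]; exact H.
Qed.

Lemma Ccont_mult f g x : Ccont f x -> Ccont g x -> Ccont (fun t => (f t * g t)%C) x.
Proof.
  intros [F1 F2] [G1 G2]; split; simpl.
  - apply continuity_pt_minus; apply continuity_pt_mult; auto.
  - apply continuity_pt_plus; apply continuity_pt_mult; auto.
Qed.

Lemma Ccont_plus f g x : Ccont f x -> Ccont g x -> Ccont (fun t => (f t + g t)%C) x.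
Proof.
  intros [F1 F2] [G1 G2]; split; simpl; apply continuity_pt_plus; auto.
Qed.

Lemma Ccont_const (a : C) x : Ccont (fun _ => a) x.
Proof. split; apply continuity_pt_const; intros u v; reflexivity. Qed.

Lemma C_const' (g : R -> C) a b :
  (forall x, Rmin a b < x < Rmax a b -> is_derive g x (RtoC 0)) ->
  (forall x, Rmin a b <= x <= Rmax a b -> Ccont g x) -> g a = g b.
Proof.
  intros Hd Hc.
  destruct (MVT_gen (fun t => fst (g t)) a b (fun _ => 0)) as [c1 [_ E1]].
  { intros x Hx. apply (C_deriv_fst g x (RtoC 0) (Hd x Hx)). }
  { intros x Hx. apply Hc, Hx. }
  destruct (MVT_gen (fun t => snd (g t)) a b (fun _ => 0)) as [c2 [_ E2]].
  { intros x Hx. apply (C_deriv_snd g x (RtoC 0) (Hd x Hx)). }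
  { intros x Hx. apply Hc, Hx. }
  simpl in E1, E2. destruct (g a), (g b). simpl in *. f_equal; lra.
Qed.

Lemma Cexp_0 : Cexp (RtoC 0) = RtoC 1.
Proof. unfold Cexp, Re, Im, RtoC; simpl. rewrite exp_0, cos_0, sin_0. f_equal; ring. Qed.

Lemma Cexp_add z w : Cexp (z + w) = (Cexp z * Cexp w)%C.
Proof.
  destruct z as [a b], w as [c d]. unfold Cexp, Re, Im; simpl.
  rewrite exp_plus, cos_plus, sin_plus. unfold Cmult; simpl. f_equal; ring.
Qed.

Lemma ode_exp (Z : R -> C) (c Y : C) a b :
  (forall x, Rmin a b < x < Rmax a b -> is_derive Z x (c * (Z x - Y))%C) ->
  (forall x, Rmin a b <= x <= Rmax a b -> continuous Z x) ->
  Z b = (Y + Cexp (c * RtoC (b - a)) * (Z a - Y))%C.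
Proof.
  intros Hd Hc.
  assert (H := C_const' (fun t => Cexp (- c * RtoC (t - a)) * (Z t + - Y))%C a b).
  simpl in H.
  assert (E : (Cexp (- c * RtoC (a - a)) * (Z a + - Y))%C =
              (Cexp (- c * RtoC (b - a)) * (Z b + - Y))%C).
  { apply H.
    - intros x Hx.
      eapply is_deriveC_eq.
      apply C_deriv_mult. apply Cexp_deriv. apply C_deriv_plus. apply Hd, Hx. apply C_deriv_const.
      cbv beta. unfold Cminus. ring.
    - intros x Hx. apply Ccont_mult. eapply Ccont_of_deriv; apply Cexp_deriv.
      apply Ccont_plus. apply Ccont_of_cont, Hc, Hx. apply Ccont_const. }
  replace (a - a) with 0 in E by ring.
  replace (- c * RtoC 0)%C with (RtoC 0) in E by ring.
  rewrite Cexp_0 in E.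
  assert (K : (Cexp (c * RtoC (b - a)) * Cexp (- c * RtoC (b - a)))%C = RtoC 1).
  { rewrite <- Cexp_add. replace (c * RtoC (b - a) + - c * RtoC (b - a))%C with (RtoC 0) by ring.
    apply Cexp_0. }
  transitivity (Y + Cexp (c * RtoC (b - a)) * (Cexp (- c * RtoC (b - a)) * (Z b + - Y)))%C.
  - rewrite Cmult_assoc, K. ring.
  - rewrite <- E. unfold Cminus. ring.
Qed.

Lemma ode_lin (Z : R -> C) (j : C) a b :
  (forall x, Rmin a b < x < Rmax a b -> is_derive Z x j) ->
  (forall x, Rmin a b <= x <= Rmax a b -> continuous Z x) ->
  Z b = (Z a + j * RtoC (b - a))%C.
Proof.
  intros Hd Hc.
  assert (E : (Z a + (- j * RtoC a + 0))%C = (Z b + (- j * RtoC b + 0))%C).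
  { apply (C_const' (fun t => Z t + (- j * RtoC t + 0))%C).
    - intros x Hx. eapply is_deriveC_eq. apply C_deriv_plus. apply Hd, Hx. apply C_deriv_lin. ring.
    - intros x Hx. apply Ccont_plus. apply Ccont_of_cont, Hc, Hx.
      eapply Ccont_of_deriv. apply C_deriv_lin. }
  rewrite RtoC_minus.
  transitivity (Z b + (- j * RtoC b + 0) + j * RtoC b)%C. ring.
  rewrite <- E. ring.
Qed.

Definition sol (m : C) (om W : R) (Z : R -> C) (I : C) : Prop :=
  (forall P, continuous Z P) /\
  (exists K : R, forall P, Cmod (Z P) <= K * (1 + Rabs P)) /\
  is_RInt Z (- W) W I /\
  forall P, P <> W -> P <> - W -> exists dZ : C, is_derive Z P dZ /\
     (RtoC om * dZ = (m + RtoC 1 - RtoC (Psi W P)) * Z P + I)%C.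

Definition mm kappa tau (lam : C) : C := (RtoC kappa * RtoC tau * lam + RtoC kappa - RtoC 1)%C.

Lemma RtoC_neq x : x <> 0 -> RtoC x <> RtoC 0.
Proof. intros H E. apply H. apply (f_equal fst) in E. simpl in E. exact E. Qed.

Lemma Csub0 (x y : C) : (x - y = 0)%C <-> x = y.
Proof.
  split; intros H.
  - transitivity (x - y + y)%C. ring. rewrite H. ring.
  - rewrite H. ring.
Qed.

Lemma alg_link (k t O l p z dz I : C) : k <> RtoC 0 ->
  ((t*l*z = t*O*dz - z + (/k*p)*z - /k*I)%C <->
   (k*t*O*dz = (k*t*l + k - 1 + 1 - p)*z + I)%C).
Proof.
  intros Hk.
  assert (E : (k*t*O*dz - ((k*t*l + k - 1 + 1 - p)*z + I))%C
              = (k * ((t*O*dz - z + (/k*p)*z - /k*I) - t*l*z))%C) by (field; auto).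
  split; intros H.
  - apply Csub0. rewrite E. rewrite H. ring.
  - symmetry. apply Csub0.
    transitivity (/k * (k * ((t*O*dz - z + (/k*p)*z - /k*I) - t*l*z)))%C.
    field; auto.
    rewrite <- E. rewrite (proj2 (Csub0 _ _) H). ring.
Qed.

Lemma link kappa tau Omega W lam Z : kappa <> 0 ->
  (eig_solution kappa tau Omega W lam Z <->
   exists I, sol (mm kappa tau lam) (kappa * tau * Omega) W Z I).
Proof.
  intros Hk. assert (Hk' := RtoC_neq _ Hk).
  unfold eig_solution, sol, mm. split.
  - intros [Hc [Hg [I [HI Hd]]]]. exists I. repeat split; auto.
    intros P H1 H2. destruct (Hd P H1 H2) as [dZ [HdZ E]]. exists dZ; split; auto.
    rewrite !RtoC_mult, RtoC_inv in E by auto. rewrite !RtoC_mult.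
    apply (alg_link _ _ _ _ _ _ _ _ Hk'). exact E.
  - intros [I [Hc [Hg [HI Hd]]]]. repeat split; auto. exists I; split; auto.
    intros P H1 H2. destruct (Hd P H1 H2) as [dZ [HdZ E]]. exists dZ; split; auto.
    rewrite !RtoC_mult, RtoC_inv by auto. rewrite !RtoC_mult in E.
    apply (alg_link _ _ _ _ _ _ _ _ Hk'). exact E.
Qed.

Lemma Psi_in W x : Rabs x < W -> Psi W x = 1.
Proof. intros H. unfold Psi. destruct (Rlt_dec (Rabs x) W); [reflexivity| contradiction]. Qed.

Lemma Psi_out W x : W < Rabs x -> Psi W x = 0.
Proof. intros H. unfold Psi. destruct (Rlt_dec (Rabs x) W); [lra| reflexivity]. Qed.

Lemma between_in W a b x : -W <= a <= W -> -W <= b <= W -> Rmin a b < x < Rmax a b -> -W < x < W.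
Proof. unfold Rmin, Rmax. destruct (Rle_dec a b); lra. Qed.

Lemma between_cl W a b x : -W <= a <= W -> -W <= b <= W -> Rmin a b <= x <= Rmax a b -> -W <= x <= W.
Proof. unfold Rmin, Rmax. destruct (Rle_dec a b); lra. Qed.

Definition outside W a := W <= a \/ a <= - W.
Definition same_side W a b := (W <= a /\ W <= b) \/ (a <= -W /\ b <= -W).

Lemma between_out W a b x : 0 < W -> same_side W a b -> Rmin a b < x < Rmax a b -> W < Rabs x.
Proof.
  intros HW. unfold same_side, Rmin, Rmax. intros Hs Hx.
  destruct (Rle_dec a b); unfold Rabs; destruct (Rcase_abs x); lra.
Qed.

Lemma sol_inside m om W Z I : 0 < W -> om <> 0 -> m <> RtoC 0 -> sol m om W Z I ->
  forall a b, -W <= a <= W -> -W <= b <= W ->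
  Z b = (- I / m + Cexp ((m / RtoC om) * RtoC (b - a)) * (Z a - (- I / m)))%C.
Proof.
  intros HW Hom Hm [Hc [_ [_ Hd]]] a b Ha Hb.
  assert (Hom' := RtoC_neq _ Hom).
  apply ode_exp.
  - intros x Hx. pose proof (between_in W a b x Ha Hb Hx) as Hx'.
    destruct (Hd x) as [dZ [HdZ E]]; try lra.
    rewrite Psi_in in E by (apply Rabs_def1; lra).
    apply (is_deriveC_eq Z x dZ); [exact HdZ|].
    transitivity ((RtoC om * dZ) / RtoC om)%C. field; auto.
    rewrite E. field. auto.
  - intros x _. apply Hc.
Qed.

Lemma sol_inside0 m om W Z I : 0 < W -> om <> 0 -> m = RtoC 0 -> sol m om W Z I ->
  forall a b, -W <= a <= W -> -W <= b <= W ->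
  Z b = (Z a + (I / RtoC om) * RtoC (b - a))%C.
Proof.
  intros HW Hom Hm [Hc [_ [_ Hd]]] a b Ha Hb.
  assert (Hom' := RtoC_neq _ Hom).
  apply ode_lin.
  - intros x Hx. pose proof (between_in W a b x Ha Hb Hx) as Hx'.
    destruct (Hd x) as [dZ [HdZ E]]; try lra.
    rewrite Psi_in in E by (apply Rabs_def1; lra).
    apply (is_deriveC_eq Z x dZ); [exact HdZ|].
    transitivity ((RtoC om * dZ) / RtoC om)%C. field; auto.
    rewrite E, Hm. field. auto.
  - intros x _. apply Hc.
Qed.

Lemma sol_outside m om W Z I : 0 < W -> om <> 0 -> (m + 1)%C <> RtoC 0 -> sol m om W Z I ->
  forall a b, same_side W a b ->
  Z b = (- I / (m + 1) + Cexp (((m + 1) / RtoC om) * RtoC (b - a)) * (Z a - (- I / (m + 1))))%C.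
Proof.
  intros HW Hom Hm [Hc [_ [_ Hd]]] a b Hs.
  assert (Hom' := RtoC_neq _ Hom).
  apply ode_exp.
  - intros x Hx. pose proof (between_out W a b x HW Hs Hx) as Hx'.
    destruct (Hd x) as [dZ [HdZ E]].
    { intros ->. rewrite Rabs_right in Hx' by lra. lra. }
    { intros ->. rewrite Rabs_left in Hx' by lra. lra. }
    rewrite Psi_out in E by lra.
    apply (is_deriveC_eq Z x dZ); [exact HdZ|].
    transitivity ((RtoC om * dZ) / RtoC om)%C. field; auto.
    rewrite E. field. auto.
  - intros x _. apply Hc.
Qed.

Lemma growth_kill r d A K : 0 < r -> 0 < d -> 0 <= A -> 0 <= K ->
  exists t, 0 < t /\ A + K * t < exp (r * t) * d.
Proof.
  intros Hr Hd HA HK.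
  set (t := 1 + 4 * (A + K) / (d * (r * r))).
  assert (Hdr : 0 < d * (r * r)) by (apply Rmult_lt_0_compat; nra).
  assert (Ht1 : 1 <= t).
  { unfold t. assert (0 <= 4 * (A + K) / (d * (r * r))).
    { apply Rmult_le_pos. lra. left; apply Rinv_0_lt_compat; exact Hdr. } lra. }
  exists t. split. lra.
  assert (He : exp (r * t) = exp (r * t / 2) * exp (r * t / 2)).
  { rewrite <- exp_plus. f_equal. field. }
  assert (H1 : 1 + r * t / 2 < exp (r * t / 2)) by (apply exp_ineq1; nra).
  assert (H2 : (r * t / 2) * (r * t / 2) < exp (r * t)).
  { rewrite He. assert (0 < r * t / 2) by nra. nra. }
  assert (H3 : d * (r * r) * t = d * (r * r) + 4 * (A + K)).
  { unfold t. field. nra. }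
  assert (H4 : (A + K) * t < d * (r * t / 2) * (r * t / 2)).
  { assert (E : d * (r * t / 2) * (r * t / 2) = (d * (r * r) * t) * t / 4) by field.
    rewrite E, H3. nra. }
  assert (H5 : d * ((r * t / 2) * (r * t / 2)) < d * exp (r * t)) by (apply Rmult_lt_compat_l; auto).
  nra.
Qed.

Lemma Cmod_Cexp z : Cmod (Cexp z) = exp (Re z).
Proof.
  unfold Cmod, Cexp. cbn [fst snd].
  replace ((exp (Re z) * cos (Im z)) ^ 2 + (exp (Re z) * sin (Im z)) ^ 2)
    with (exp (Re z) ^ 2).
  - apply sqrt_pow2. left; apply exp_pos.
  - pose proof (sin2_cos2 (Im z)) as Hs. unfold Rsqr in Hs. replace (exp (Re z) ^ 2) with (exp (Re z) ^ 2 * (sin (Im z) * sin (Im z) + cos (Im z) * cos (Im z))) by (rewrite Hs; ring). ring.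
Qed.

Lemma Cmod_rev (Y X : C) : Cmod X - Cmod Y <= Cmod (Y + X).
Proof.
  assert (H := Cmod_triangle (Y + X) (- Y)).
  rewrite Cmod_opp in H. replace (Y + X + - Y)%C with X in H by ring. lra.
Qed.

Lemma Re_mult_R (z : C) r : Re (z * RtoC r) = Re z * r.
Proof. destruct z; unfold Cmult, Re, RtoC; simpl. ring. Qed.

Lemma Re_div_R (z : C) r : r <> 0 -> Re (z / RtoC r) = Re z / r.
Proof.
  intros H. unfold Cdiv. rewrite <- RtoC_inv by auto. rewrite Re_mult_R. reflexivity.
Qed.

Lemma Re_plus1 (z : C) : Re (z + RtoC 1) = Re z + 1.
Proof. destruct z; unfold Cplus, Re, RtoC; simpl. reflexivity. Qed.

Lemma sideA m om W Z I e : 0 < W -> om <> 0 -> (m + 1)%C <> RtoC 0 ->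
  sol m om W Z I -> (e = W \/ e = - W) -> 0 < e * (Re m + 1) / om ->
  Z e = (- I / (m + 1))%C.
Proof.
  intros HW Hom Hm1 Hs He Hside.
  assert (HeW : Rabs e = W) by (destruct He as [E | E]; rewrite E; [apply Rabs_right; lra| rewrite Rabs_Ropp; apply Rabs_right; lra]).
  destruct (Req_dec (Cmod (Z e - - I / (m + 1))) 0) as [H0|H0].
  { apply Csub0, Cmod_eq_0, H0. }
  exfalso.
  assert (Hd : 0 < Cmod (Z e - - I / (m + 1))).
  { destruct (Cmod_ge_0 (Z e - - I / (m + 1))); [assumption| congruence]. }
  set (d := Cmod (Z e - - I / (m + 1))) in *.
  destruct Hs as [Hc [[K HK] [HI Hd']]].
  assert (HK0 : 0 <= K).
  { specialize (HK 0). rewrite Rabs_R0, Rplus_0_r, Rmult_1_r in HK.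
    pose proof (Cmod_ge_0 (Z 0)). lra. }
  set (sd := e / W).
  assert (Hsd : sd = 1 \/ sd = -1).
  { unfold sd. destruct He as [-> | ->]; [left|right]; field; lra. }
  set (r := sd * ((Re m + 1) / om)).
  assert (Hr : 0 < r).
  { unfold r, sd. replace (e / W * ((Re m + 1) / om)) with ((e * (Re m + 1) / om) / W) by (field; lra).
    apply Rdiv_lt_0_compat; lra. }
  destruct (growth_kill r d (Cmod (- I / (m + 1)) + K * (1 + W)) K Hr Hd) as [t [Ht Hlt]].
  { pose proof (Cmod_ge_0 (- I / (m + 1))). nra. }
  { exact HK0. }
  set (P := e + sd * t).
  assert (Hss : same_side W e P).
  { unfold same_side, P. destruct He as [-> | ->]; destruct Hsd as [E|E]; rewrite E;
    unfold sd in E; try (left; lra); try (right; lra);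
    exfalso; apply (f_equal (fun x => x * W)) in E; field_simplify in E; lra. }
  assert (EZ := sol_outside m om W Z I HW Hom Hm1 (conj Hc (conj (ex_intro _ K HK) (conj HI Hd'))) e P Hss).
  assert (Hup : Cmod (Z P) <= K * (1 + W + t)).
  { eapply Rle_trans. apply HK. apply Rmult_le_compat_l. lra.
    unfold P. assert (Rabs (e + sd * t) <= Rabs e + Rabs (sd * t)) by apply Rabs_triang.
    rewrite Rabs_mult, (Rabs_right t) in H by lra.
    assert (Rabs sd = 1) by (destruct Hsd as [E | E]; rewrite E; [apply Rabs_R1 | rewrite Rabs_left by lra; lra]).
    nra. }
  assert (Hlow : exp (r * t) * d - Cmod (- I / (m + 1)) <= Cmod (Z P)).
  { rewrite EZ. eapply Rle_trans; [|apply Cmod_rev].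
    rewrite Cmod_mult, Cmod_Cexp.
    replace (Re ((m + 1) / RtoC om * RtoC (P - e))) with (r * t). unfold d. lra.
    rewrite Re_mult_R, Re_div_R by auto. rewrite Re_plus1. unfold r, P. ring. }
  lra.
Qed.

Definition cin (m : C) om : C := (m / RtoC om)%C.
Definition cout (m : C) om : C := ((m + 1) / RtoC om)%C.
Definition Phin m om e P : C := (- / m + Cexp (cin m om * RtoC (P - e)) / (m * (m + 1)))%C.
Definition Fout m om e p0 P : C :=
  (- / (m + 1) + Cexp (cout m om * RtoC (P - p0)) * (Phin m om e p0 + / (m + 1)))%C.
Definition glue W (Fl Fin Fr : R -> C) P : C :=
  if Rlt_dec P (- W) then Fl P else if Rle_dec P W then Fin P else Fr P.
Definition Phi m om W e := glue W (Fout m om e (- W)) (Phin m om e) (Fout m om e W).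

Definition Dchar m om W e : C :=
  (m * m * (m + 1) + RtoC (2 * W) * m * (m + 1)
   - RtoC om * (Cexp (cin m om * RtoC (W - e)) - Cexp (cin m om * RtoC (- W - e))))%C.


Lemma sol_formula m om W Z I e : 0 < W -> om <> 0 -> m <> RtoC 0 -> (m + 1)%C <> RtoC 0 ->
  sol m om W Z I -> (e = W \/ e = - W) -> 0 < e * (Re m + 1) / om ->
  forall P, Z P = (I * Phi m om W e P)%C.
Proof.
  intros HW Hom Hm Hm1 Hs He Hside.
  assert (Hom' := RtoC_neq _ Hom).
  assert (HZe := sideA m om W Z I e HW Hom Hm1 Hs He Hside).
  assert (Hin : forall P, -W <= P <= W -> Z P = (I * Phin m om e P)%C).
  { intros P HP. rewrite (sol_inside m om W Z I HW Hom Hm Hs e P) by (destruct He; subst; lra).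
    rewrite HZe. unfold Phin, cin. field. auto. }
  intros P. unfold Phi, glue.
  destruct (Rlt_dec P (- W)) as [H1|H1].
  - rewrite (sol_outside m om W Z I HW Hom Hm1 Hs (- W) P) by (right; lra).
    rewrite Hin by lra. unfold Fout, cout. field. auto.
  - destruct (Rle_dec P W) as [H2|H2].
    + apply Hin. lra.
    + rewrite (sol_outside m om W Z I HW Hom Hm1 Hs W P) by (left; lra).
      rewrite Hin by lra. unfold Fout, cout. field. auto.
Qed.

Lemma Phin_deriv m om e x :
  is_derive (Phin m om e) x (cin m om * Cexp (cin m om * RtoC (x - e)) * / (m * (m + 1)))%C.
Proof.
  unfold Phin, Cdiv. eapply is_deriveC_eq.
  apply C_deriv_plus. apply C_deriv_const. apply C_deriv_mult. apply Cexp_deriv. apply C_deriv_const.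
  cbv beta. ring.
Qed.

Lemma IPhin_cont m om e (I : C) x : continuous (fun P => (I * Phin m om e P)%C) x.
Proof.
  assert (H : ex_derive (fun P => (I * Phin m om e P)%C) x).
  { eexists. apply C_deriv_mult. apply C_deriv_const. apply Phin_deriv. }
  exact (ex_derive_continuous (K := R_AbsRing) (V := C_R_NormedModule) _ x H).
Qed.

Definition Fant m om e P : C :=
  ((- / m) * RtoC P + 0 + Cexp (cin m om * RtoC (P - e)) * (RtoC om / m / (m * (m + 1))))%C.

Lemma Fant_deriv m om e x : om <> 0 -> m <> RtoC 0 -> (m + 1)%C <> RtoC 0 ->
  is_derive (Fant m om e) x (Phin m om e x).
Proof.
  intros Hom Hm Hm1. assert (Hom' := RtoC_neq _ Hom).
  unfold Fant. eapply is_deriveC_eq.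
  apply C_deriv_plus. apply C_deriv_lin. apply C_deriv_mult. apply Cexp_deriv. apply C_deriv_const.
  unfold Phin, cin. field. auto.
Qed.

Lemma int_Phin m om W e I : om <> 0 -> m <> RtoC 0 -> (m + 1)%C <> RtoC 0 ->
  is_RInt (fun P => (I * Phin m om e P)%C) (- W) W
    (I * Fant m om e W - I * Fant m om e (- W))%C.
Proof.
  intros Hom Hm Hm1.
  apply (is_RInt_derive (V := C_R_CompleteNormedModule) (fun P => I * Fant m om e P)%C).
  - intros x _. eapply is_deriveC_eq. apply C_deriv_mult. apply C_deriv_const.
    apply Fant_deriv; auto. cbv beta. ring.
  - intros x _. apply IPhin_cont.
Qed.

Lemma RInt_uniq (f : R -> C) a b (I J : C) : is_RInt f a b I -> is_RInt f a b J -> I = J.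
Proof.
  intros H1 H2.
  rewrite <- (is_RInt_unique (V := C_R_CompleteNormedModule) f a b I H1).
  rewrite <- (is_RInt_unique (V := C_R_CompleteNormedModule) f a b J H2). reflexivity.
Qed.

Lemma glue_in W Fl Fin Fr P : - W <= P <= W -> glue W Fl Fin Fr P = Fin P.
Proof.
  intros H. unfold glue. destruct (Rlt_dec P (- W)); [lra|]. destruct (Rle_dec P W); [reflexivity|lra].
Qed.

Lemma sol_D m om W Z I e : 0 < W -> om <> 0 -> m <> RtoC 0 -> (m + 1)%C <> RtoC 0 ->
  sol m om W Z I -> (e = W \/ e = - W) -> 0 < e * (Re m + 1) / om ->
  (I * Dchar m om W e)%C = RtoC 0.
Proof.
  intros HW Hom Hm Hm1 Hs He Hside.
  assert (Hom' := RtoC_neq _ Hom).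
  assert (HF := sol_formula m om W Z I e HW Hom Hm Hm1 Hs He Hside).
  destruct Hs as [_ [_ [HI _]]].
  assert (HI' : is_RInt (fun P => (I * Phin m om e P)%C) (- W) W I).
  { apply (is_RInt_ext Z). intros x Hx. rewrite HF. unfold Phi. rewrite glue_in. reflexivity.
    revert Hx. unfold Rmin, Rmax. destruct (Rle_dec (- W) W); lra. exact HI. }
  assert (E := RInt_uniq _ _ _ _ _ HI' (int_Phin m om W e I Hom Hm Hm1)).
  transitivity (m * m * (m + 1) * (I - (I * Fant m om e W - I * Fant m om e (- W))))%C.
  - unfold Dchar, Fant. rewrite !RtoC_mult, RtoC_opp.
    replace (- W - e) with (- W - e) by ring.
    field. auto.
  - rewrite <- E. ring.
Qed.

Lemma C_deriv_sub (e x : R) : is_derive (fun t => RtoC (t - e)) x (RtoC 1).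
Proof. apply C_deriv_comp; simpl; auto_derive; auto; ring. Qed.

Lemma Cmult_R_eq0 (I : C) q : q <> 0 -> (I * RtoC q)%C = RtoC 0 -> I = RtoC 0.
Proof.
  intros Hq H. assert (Hq' := RtoC_neq _ Hq).
  transitivity ((I * RtoC q) / RtoC q)%C. field; auto. rewrite H. field; auto.
Qed.

Lemma sol_m0 om W Z I e : 0 < W -> om <> 0 -> sol (RtoC 0) om W Z I ->
  (e = W \/ e = - W) -> 0 < e * (Re (RtoC 0) + 1) / om -> I = RtoC 0.
Proof.
  intros HW Hom Hs He Hside.
  assert (Hom' := RtoC_neq _ Hom).
  assert (Hm1 : (RtoC 0 + 1)%C <> RtoC 0).
  { replace (RtoC 0 + 1)%C with (RtoC 1) by ring. apply RtoC_neq; lra. }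
  assert (HZe := sideA _ om W Z I e HW Hom Hm1 Hs He Hside).
  assert (Hin : forall P, -W <= P <= W -> Z P = (Z e + I / RtoC om * RtoC (P - e))%C).
  { intros P HP. apply (sol_inside0 (RtoC 0) om W Z I HW Hom eq_refl Hs e P); auto.
    destruct He; subst; lra. }
  simpl in Hside. replace (0 + 1) with 1 in Hside by ring.
  set (G := fun P => (I / RtoC om / 2 * (RtoC (P - e) * RtoC (P - e)) + (Z e * RtoC P + 0))%C).
  assert (H1 : is_RInt (fun P => (Z e + I / RtoC om * RtoC (P - e))%C) (- W) W (Cminus (G W) (G (- W)))).
  { apply (is_RInt_derive (V := C_R_CompleteNormedModule) G).
    - intros x _. unfold G. eapply is_deriveC_eq.
      apply C_deriv_plus. apply C_deriv_mult. apply C_deriv_const.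
      apply C_deriv_mult; apply C_deriv_sub.
      apply C_deriv_lin.
      cbv beta. field; auto.
    - intros x _.
      assert (H : ex_derive (fun P => (Z e + I / RtoC om * RtoC (P - e))%C) x).
      { eexists. apply C_deriv_plus. apply C_deriv_const. apply C_deriv_mult. apply C_deriv_const.
        apply C_deriv_sub. }
      exact (ex_derive_continuous (K := R_AbsRing) (V := C_R_NormedModule) _ x H). }
  destruct Hs as [_ [_ [HI _]]].
  assert (H2 : is_RInt (fun P => (Z e + I / RtoC om * RtoC (P - e))%C) (- W) W I).
  { apply (is_RInt_ext Z). intros x Hx. apply Hin.
    revert Hx. unfold Rmin, Rmax. destruct (Rle_dec (- W) W); lra. exact HI. }
  assert (E := RInt_uniq _ _ _ _ _ H2 H1).
  assert (He' : 0 < e / om) by (replace (e / om) with (e * 1 / om) by (field; auto); exact Hside).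
  apply (Cmult_R_eq0 I (1 + 2 * W + 2 * W * (e / om))).
  { assert (0 < 2 * W * (e / om)) by (apply Rmult_lt_0_compat; lra). lra. }
  transitivity (Cminus I (Cminus (G W) (G (- W)))).
  - unfold G. rewrite HZe. unfold Rdiv. rewrite !RtoC_plus, !RtoC_mult, !RtoC_minus, RtoC_opp.
    rewrite RtoC_inv by auto. field; auto.
  - rewrite <- E. ring.
Qed.

Lemma exp_mono x y : x <= y -> exp x <= exp y.
Proof. intros [H|H]. left; apply exp_increasing; auto. subst; lra. Qed.

Lemma Phin_e m om e : m <> RtoC 0 -> (m + 1)%C <> RtoC 0 -> Phin m om e e = (- / (m + 1))%C.
Proof.
  intros Hm Hm1. unfold Phin. replace (e - e) with 0 by ring.
  replace (cin m om * RtoC 0)%C with (RtoC 0) by ring. rewrite Cexp_0. field; auto.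
Qed.

Lemma sol_zero m om W Z e : 0 < W -> om <> 0 -> (m + 1)%C <> RtoC 0 ->
  sol m om W Z (RtoC 0) -> (e = W \/ e = - W) -> 0 < e * (Re m + 1) / om ->
  forall P, Z P = RtoC 0.
Proof.
  intros HW Hom Hm1 Hs He Hside P. assert (Hom' := RtoC_neq _ Hom).
  destruct (classic (m = RtoC 0)) as [Hm|Hm].
  - assert (HZe := sideA m om W Z (RtoC 0) e HW Hom Hm1 Hs He Hside).
    assert (Hin : forall P, -W <= P <= W -> Z P = RtoC 0).
    { intros Q HQ. rewrite (sol_inside0 m om W Z (RtoC 0) HW Hom Hm Hs e Q) by (destruct He; subst; lra).
      rewrite HZe. field; auto. }
    destruct (Rlt_dec P (- W)).
    + rewrite (sol_outside m om W Z (RtoC 0) HW Hom Hm1 Hs (- W) P) by (right; lra).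
      rewrite Hin by lra. field; auto.
    + destruct (Rle_dec P W). apply Hin; lra.
      rewrite (sol_outside m om W Z (RtoC 0) HW Hom Hm1 Hs W P) by (left; lra).
      rewrite Hin by lra. field; auto.
  - rewrite (sol_formula m om W Z (RtoC 0) e HW Hom Hm Hm1 Hs He Hside). ring.
Qed.

Lemma Cmod_Cexp_mult_le (z k : C) : (k = RtoC 0 \/ Re z <= 0) -> Cmod (Cexp z * k) <= Cmod k.
Proof.
  intros [H|H].
  - rewrite H, Cmod_mult, Cmod_0. lra.
  - rewrite Cmod_mult, Cmod_Cexp. pose proof (Cmod_ge_0 k).
    assert (exp (Re z) <= 1) by (rewrite <- exp_0; apply exp_mono; auto). nra.
Qed.

Lemma Phi_bounded m om W e : 0 < W -> om <> 0 -> m <> RtoC 0 -> (m + 1)%C <> RtoC 0 ->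
  (e = W \/ e = - W) -> 0 < e * (Re m + 1) / om ->
  exists M, 0 <= M /\ forall P, Cmod (Phi m om W e P) <= M.
Proof.
  intros HW Hom Hm Hm1 He Hside.
  set (kl := (Phin m om e (- W) + / (m + 1))%C).
  set (kr := (Phin m om e W + / (m + 1))%C).
  exists (Cmod (/ m) + exp (Rabs (Re (cin m om)) * (2 * W)) * Cmod (/ (m * (m + 1)))
          + Cmod (/ (m + 1)) + Cmod kl + Cmod kr).
  assert (H0 : 0 <= exp (Rabs (Re (cin m om)) * (2 * W)) * Cmod (/ (m * (m + 1)))).
  { apply Rmult_le_pos. left; apply exp_pos. apply Cmod_ge_0. }
  pose proof (Cmod_ge_0 (/ m)). pose proof (Cmod_ge_0 (/ (m + 1))).
  pose proof (Cmod_ge_0 kl). pose proof (Cmod_ge_0 kr).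
  split. lra.
  assert (HRe : (Re m + 1) / om = Re (cout m om)).
  { unfold cout. rewrite Re_div_R by auto. rewrite Re_plus1. reflexivity. }
  intros P. unfold Phi, glue.
  destruct (Rlt_dec P (- W)) as [G1|G1].
  - unfold Fout. fold kl. eapply Rle_trans. apply Cmod_triangle. rewrite Cmod_opp.
    assert (Cmod (Cexp (cout m om * RtoC (P - - W)) * kl) <= Cmod kl).
    { apply Cmod_Cexp_mult_le. destruct He as [E|E].
      - right. rewrite Re_mult_R, <- HRe. subst e.
        assert (0 < (Re m + 1) / om) by (replace ((Re m + 1) / om) with (W * (Re m + 1) / om / W) by (field; lra); apply Rdiv_lt_0_compat; lra).
        nra.
      - left. unfold kl. rewrite <- E. rewrite Phin_e by auto. ring. }
    lra.
  - destruct (Rle_dec P W) as [G2|G2].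
    + unfold Phin. eapply Rle_trans. apply Cmod_triangle. rewrite Cmod_opp.
      unfold Cdiv. rewrite Cmod_mult, Cmod_Cexp.
      assert (exp (Re (cin m om * RtoC (P - e))) <= exp (Rabs (Re (cin m om)) * (2 * W))).
      { apply exp_mono. rewrite Re_mult_R.
        eapply Rle_trans. apply Rle_abs. rewrite Rabs_mult. apply Rmult_le_compat_l. apply Rabs_pos.
        destruct He; subst e; apply Rabs_le; lra. }
      assert (exp (Re (cin m om * RtoC (P - e))) * Cmod (/ (m * (m + 1))) <=
              exp (Rabs (Re (cin m om)) * (2 * W)) * Cmod (/ (m * (m + 1)))).
      { apply Rmult_le_compat_r. apply Cmod_ge_0. auto. }
      lra.
    + unfold Fout. fold kr. eapply Rle_trans. apply Cmod_triangle. rewrite Cmod_opp.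
      assert (Cmod (Cexp (cout m om * RtoC (P - W)) * kr) <= Cmod kr).
      { apply Cmod_Cexp_mult_le. destruct He as [E|E].
        - left. unfold kr. rewrite <- E. rewrite Phin_e by auto. ring.
        - right. rewrite Re_mult_R, <- HRe. subst e.
          assert (0 < - ((Re m + 1) / om)) by (replace (- ((Re m + 1) / om)) with (- W * (Re m + 1) / om / W) by (field; lra); apply Rdiv_lt_0_compat; lra).
          nra. }
      lra.
Qed.

Lemma loc_int a b x : a < x < b -> locally x (fun y => a < y /\ y < b).
Proof.
  intros H. apply (open_and (fun y => a < y) (fun y => y < b) (open_gt a) (open_lt b) x H).
Qed.

Lemma pw_cont (f g1 g2 : R -> C) p r q : r < p < q ->
  continuous g1 p -> continuous g2 p -> g1 p = f p -> g2 p = f p ->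
  (forall x, r < x <= p -> f x = g1 x) -> (forall x, p <= x < q -> f x = g2 x) ->
  continuous f p.
Proof.
  intros Hrpq H1 H2 E1 E2 F1 F2.
  unfold continuous. apply filterlim_locally. intros eps.
  assert (A1 := proj1 (filterlim_locally g1 (g1 p)) H1 eps).
  assert (A2 := proj1 (filterlim_locally g2 (g2 p)) H2 eps).
  assert (A3 := loc_int r q p Hrpq).
  generalize (filter_and _ _ A1 (filter_and _ _ A2 A3)). apply filter_imp.
  intros x [B1 [B2 [Hr Hq]]].
  destruct (Rle_dec x p).
  - rewrite <- E1. rewrite (F1 x) by lra. exact B1.
  - rewrite <- E2. rewrite (F2 x) by lra. exact B2.
Qed.

Lemma cont_of_derC (F : R -> C) x (l : C) : is_derive F x l -> continuous F x.
Proof.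
  intros H. exact (ex_derive_continuous (K := R_AbsRing) (V := C_R_NormedModule) _ x (ex_intro _ l H)).
Qed.

Lemma glue_sol m om W (Fl Fin Fr : R -> C) (I : C) : 0 < W -> om <> 0 ->
  (forall P, is_derive Fin P ((m * Fin P + I) / RtoC om)%C) ->
  (forall P, is_derive Fl P (((m + 1) * Fl P + I) / RtoC om)%C) ->
  (forall P, is_derive Fr P (((m + 1) * Fr P + I) / RtoC om)%C) ->
  Fl (- W) = Fin (- W) -> Fr W = Fin W -> is_RInt Fin (- W) W I ->
  (exists K, forall P, Cmod (glue W Fl Fin Fr P) <= K * (1 + Rabs P)) ->
  sol m om W (glue W Fl Fin Fr) I.
Proof.
  intros HW Hom Din Dl Dr El Er HI HK.
  assert (Hom' := RtoC_neq _ Hom).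
  assert (Gl : forall x, x < - W -> glue W Fl Fin Fr x = Fl x).
  { intros x Hx. unfold glue. destruct (Rlt_dec x (- W)); [reflexivity|lra]. }
  assert (Gl' : forall x, x <= - W -> glue W Fl Fin Fr x = Fl x).
  { intros x Hx. destruct (Rle_lt_or_eq_dec _ _ Hx). apply Gl; auto. subst x.
    rewrite glue_in by lra. auto. }
  assert (Gin : forall x, - W <= x <= W -> glue W Fl Fin Fr x = Fin x) by (intros; apply glue_in; auto).
  assert (Gr : forall x, W < x -> glue W Fl Fin Fr x = Fr x).
  { intros x Hx. unfold glue. destruct (Rlt_dec x (- W)); [lra|]. destruct (Rle_dec x W); [lra|reflexivity]. }
  assert (Gr' : forall x, W <= x -> glue W Fl Fin Fr x = Fr x).
  { intros x Hx. destruct (Rle_lt_or_eq_dec _ _ Hx). apply Gr; auto. subst x.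
    rewrite glue_in by lra. auto. }
  repeat split.
  - intros P.
    destruct (Rtotal_order P (- W)) as [H1|[H1|H1]].
    + apply (continuous_ext_loc _ Fl). 
      { generalize (loc_int (P - 1) (- W) P ltac:(lra)). apply filter_imp.
        intros y Hy. symmetry. apply Gl. lra. }
      eapply cont_of_derC. apply Dl.
    + subst P. apply (pw_cont _ Fl Fin (- W) (- W - 1) W). lra.
      eapply cont_of_derC; apply Dl. eapply cont_of_derC; apply Din.
      symmetry; apply Gl'; lra. symmetry; apply Gin; lra.
      intros x Hx; apply Gl'; lra. intros x Hx; apply Gin; lra.
    + destruct (Rtotal_order P W) as [H2|[H2|H2]].
      * apply (continuous_ext_loc _ Fin).
        { generalize (loc_int (- W) W P ltac:(lra)). apply filter_imp.
          intros y Hy. symmetry. apply Gin. lra. }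
        eapply cont_of_derC. apply Din.
      * subst P. apply (pw_cont _ Fin Fr W (- W) (W + 1)). lra.
        eapply cont_of_derC; apply Din. eapply cont_of_derC; apply Dr.
        symmetry; apply Gin; lra. symmetry; apply Gr'; lra.
        intros x Hx; apply Gin; lra. intros x Hx; apply Gr'; lra.
      * apply (continuous_ext_loc _ Fr).
        { generalize (loc_int W (P + 1) P ltac:(lra)). apply filter_imp.
          intros y Hy. symmetry. apply Gr. lra. }
        eapply cont_of_derC. apply Dr.
  - exact HK.
  - apply (is_RInt_ext Fin). intros x Hx. symmetry. apply Gin.
    revert Hx. unfold Rmin, Rmax. destruct (Rle_dec (- W) W); lra. exact HI.
  - intros P HP1 HP2.
    destruct (Rtotal_order P (- W)) as [H1|[H1|H1]]; [| contradiction |].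
    + exists (((m + 1) * Fl P + I) / RtoC om)%C. split.
      * apply (is_derive_ext_loc Fl).
        { generalize (loc_int (P - 1) (- W) P ltac:(lra)). apply filter_imp.
          intros y Hy. symmetry. apply Gl. lra. }
        apply Dl.
      * rewrite Psi_out by (rewrite Rabs_left by lra; lra). rewrite Gl by lra. field; auto.
    + destruct (Rtotal_order P W) as [H2|[H2|H2]]; [| contradiction |].
      * exists ((m * Fin P + I) / RtoC om)%C. split.
        -- apply (is_derive_ext_loc Fin).
           { generalize (loc_int (- W) W P ltac:(lra)). apply filter_imp.
             intros y Hy. symmetry. apply Gin. lra. }
           apply Din.
        -- rewrite Psi_in by (apply Rabs_def1; lra). rewrite Gin by lra. field; auto.
      * exists (((m + 1) * Fr P + I) / RtoC om)%C. split.
        -- apply (is_derive_ext_loc Fr).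
           { generalize (loc_int W (P + 1) P ltac:(lra)). apply filter_imp.
             intros y Hy. symmetry. apply Gr. lra. }
           apply Dr.
        -- rewrite Psi_out by (rewrite Rabs_right by lra; lra). rewrite Gr by lra. field; auto.
Qed.

Lemma norm_Cmod (x : C) : norm (K := R_AbsRing) (V := C_R_NormedModule) x = Cmod x.
Proof.
  unfold norm. simpl. unfold prod_norm, Cmod. simpl.
  assert (Ha : forall a : R, norm (K := R_AbsRing) (V := R_NormedModule) a * (norm (K := R_AbsRing) (V := R_NormedModule) a * 1) = a * (a * 1)).
  { intros a. change (norm (K := R_AbsRing) (V := R_NormedModule) a) with (Rabs a).
    rewrite !Rmult_1_r, <- Rabs_mult. apply Rabs_pos_eq. apply Rle_0_sqr. }
  rewrite !Ha. reflexivity.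
Qed.

Lemma compact_bound (f : R -> C) a b : (forall x, continuous f x) ->
  exists M, forall x, a <= x <= b -> Cmod (f x) <= M.
Proof.
  intros Hc.
  destruct (bounded_continuity (K := R_AbsRing) (V := C_R_NormedModule) f a b) as [M HM].
  { intros x _. apply Hc. }
  exists M. intros x Hx. rewrite <- norm_Cmod. left. apply HM, Hx.
Qed.

Lemma glue_growth W (Fl Fin Fr : R -> C) : 0 < W ->
  (exists K1, forall P, P <= - W -> Cmod (Fl P) <= K1 * (1 + Rabs P)) ->
  (exists K2, forall P, - W <= P <= W -> Cmod (Fin P) <= K2) ->
  (exists K3, forall P, W <= P -> Cmod (Fr P) <= K3 * (1 + Rabs P)) ->
  exists K, forall P, Cmod (glue W Fl Fin Fr P) <= K * (1 + Rabs P).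
Proof.
  intros HW [K1 H1] [K2 H2] [K3 H3].
  exists (Rabs K1 + Rabs K2 + Rabs K3). intros P.
  pose proof (Rabs_pos P). pose proof (Rabs_pos K1). pose proof (Rabs_pos K2). pose proof (Rabs_pos K3).
  pose proof (Rle_abs K1). pose proof (Rle_abs K2). pose proof (Rle_abs K3).
  unfold glue. destruct (Rlt_dec P (- W)).
  - specialize (H1 P ltac:(lra)). nra.
  - destruct (Rle_dec P W).
    + specialize (H2 P ltac:(lra)). nra.
    + specialize (H3 P ltac:(lra)). nra.
Qed.

Lemma Fout_deriv m om e p0 x : om <> 0 -> (m + 1)%C <> RtoC 0 ->
  is_derive (Fout m om e p0) x (((m + 1) * Fout m om e p0 x + 1) / RtoC om)%C.
Proof.
  intros Hom Hm1. assert (Hom' := RtoC_neq _ Hom).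
  unfold Fout. eapply is_deriveC_eq.
  apply C_deriv_plus. apply C_deriv_const. apply C_deriv_mult. apply Cexp_deriv. apply C_deriv_const.
  cbv beta. unfold cout. field. auto.
Qed.

Lemma Fout_p0 m om e p0 : Fout m om e p0 p0 = Phin m om e p0.
Proof.
  unfold Fout. replace (p0 - p0) with 0 by ring.
  replace (cout m om * RtoC 0)%C with (RtoC 0) by ring. rewrite Cexp_0. ring.
Qed.

Lemma Phi_sol m om W e : 0 < W -> om <> 0 -> m <> RtoC 0 -> (m + 1)%C <> RtoC 0 ->
  (e = W \/ e = - W) -> 0 < e * (Re m + 1) / om -> Dchar m om W e = RtoC 0 ->
  sol m om W (Phi m om W e) (RtoC 1).
Proof.
  intros HW Hom Hm Hm1 He Hside HD.
  assert (Hom' := RtoC_neq _ Hom).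
  unfold Phi. apply glue_sol; auto.
  - intros P. eapply is_deriveC_eq. apply Phin_deriv. unfold Phin, cin. field. auto.
  - intros P. apply Fout_deriv; auto.
  - intros P. apply Fout_deriv; auto.
  - apply Fout_p0.
  - apply Fout_p0.
  - assert (H := int_Phin m om W e (RtoC 1) Hom Hm Hm1).
    assert (X : (m * m * (m + 1) * (RtoC 1 - (RtoC 1 * Fant m om e W - RtoC 1 * Fant m om e (- W))))%C
                = Dchar m om W e).
    { unfold Dchar, Fant. rewrite !RtoC_mult, RtoC_opp. field. auto. }
    assert (Y : (RtoC 1 * Fant m om e W - RtoC 1 * Fant m om e (- W))%C = RtoC 1).
    { symmetry. apply Csub0.
      transitivity (/ (m * m * (m + 1)) * (m * m * (m + 1) * (RtoC 1 - (RtoC 1 * Fant m om e W - RtoC 1 * Fant m om e (- W)))))%C.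
      field. auto. rewrite X, HD. ring. }
    rewrite Y in H. apply (is_RInt_ext _ _ _ _ _ (fun x _ => Cmult_1_l _) H).
  - destruct (Phi_bounded m om W e HW Hom Hm Hm1 He Hside) as [M [HM0 HM]].
    exists M. intros P. specialize (HM P). unfold Phi in HM.
    pose proof (Rabs_pos P). nra.
Qed.

Lemma core_iff m om W e : 0 < W -> om <> 0 -> (m + 1)%C <> RtoC 0 ->
  (e = W \/ e = - W) -> 0 < e * (Re m + 1) / om ->
  ((exists Z I, sol m om W Z I /\ exists P, Z P <> RtoC 0) <->
   (m <> RtoC 0 /\ Dchar m om W e = RtoC 0)).
Proof.
  intros HW Hom Hm1 He Hside. split.
  - intros [Z [I [Hs [P HP]]]].
    destruct (classic (m = RtoC 0)) as [Hm|Hm].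
    + exfalso. subst m.
      assert (HI := sol_m0 om W Z I e HW Hom Hs He Hside). subst I.
      apply HP. apply (sol_zero _ om W Z e HW Hom Hm1 Hs He Hside).
    + split; auto.
      assert (HD := sol_D m om W Z I e HW Hom Hm Hm1 Hs He Hside).
      destruct (classic (I = RtoC 0)) as [HI|HI].
      * exfalso. subst I. apply HP. apply (sol_zero m om W Z e HW Hom Hm1 Hs He Hside).
      * transitivity (/ I * (I * Dchar m om W e))%C. field. auto. rewrite HD. ring.
  - intros [Hm HD]. exists (Phi m om W e), (RtoC 1). split.
    + apply Phi_sol; auto.
    + exists e. unfold Phi. rewrite glue_in by (destruct He; subst; lra).
      rewrite Phin_e by auto. intros E.
      apply (f_equal (fun z => (z * (m + 1))%C)) in E.
      replace (- / (m + 1) * (m + 1))%C with (- RtoC 1)%C in E by (field; auto).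
      replace (RtoC 0 * (m + 1))%C with (RtoC 0) in E by ring.
      apply (f_equal fst) in E. simpl in E. lra.
Qed.

Lemma core_simple m om W e : 0 < W -> om <> 0 -> (m + 1)%C <> RtoC 0 ->
  (e = W \/ e = - W) -> 0 < e * (Re m + 1) / om -> m <> RtoC 0 ->
  forall Z0 I0, sol m om W Z0 I0 -> (exists P, Z0 P <> RtoC 0) ->
  (forall Z I, sol m om W Z I -> exists c : C, forall P, Z P = (c * Z0 P)%C) /\
  (forall Z I, sol m om W Z I -> exists M, forall P, Cmod (Z P) <= M).
Proof.
  intros HW Hom Hm1 He Hside Hm Z0 I0 Hs0 [P0 HP0].
  assert (HI0 : I0 <> RtoC 0).
  { intros E. subst I0. apply HP0. apply (sol_zero m om W Z0 e HW Hom Hm1 Hs0 He Hside). }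
  split.
  - intros Z I Hs. exists (I / I0)%C. intros P.
    rewrite (sol_formula m om W Z I e HW Hom Hm Hm1 Hs He Hside).
    rewrite (sol_formula m om W Z0 I0 e HW Hom Hm Hm1 Hs0 He Hside). field. auto.
  - intros Z I Hs.
    destruct (Phi_bounded m om W e HW Hom Hm Hm1 He Hside) as [M [HM0 HM]].
    exists (Cmod I * M). intros P.
    rewrite (sol_formula m om W Z I e HW Hom Hm Hm1 Hs He Hside), Cmod_mult.
    apply Rmult_le_compat_l. apply Cmod_ge_0. apply HM.
Qed.

Lemma exp_inj x y : exp x = exp y -> x = y.
Proof.
  intros H. destruct (Rtotal_order x y) as [H1|[H1|H1]]; auto.
  apply exp_increasing in H1. lra. apply exp_increasing in H1. lra.
Qed.

Lemma RInt_zero_fun (Z : R -> C) a b (I : C) : is_RInt Z a b I -> (forall P, Z P = RtoC 0) -> I = RtoC 0.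
Proof.
  intros H HZ.
  assert (H' : is_RInt (fun _ => RtoC 0) a b I).
  { apply (is_RInt_ext Z). intros; apply HZ. exact H. }
  assert (H2 := is_RInt_const (V := C_R_NormedModule) a b (RtoC 0)).
  rewrite (RInt_uniq _ _ _ _ _ H' H2). unfold scal; simpl. unfold prod_scal; simpl.
  unfold RtoC. f_equal; unfold scal; simpl; unfold mult; simpl; ring.
Qed.

Lemma cont_spec m om W : 0 < W -> om <> 0 -> Re m = -1 ->
  exists Z I, sol m om W Z I /\ exists P, Z P <> RtoC 0.
Proof.
  intros HW Hom HRe.
  assert (Hom' := RtoC_neq _ Hom).
  assert (Hm : m <> RtoC 0).
  { intros E. rewrite E in HRe. simpl in HRe. lra. }
  set (c := cin m om).
  set (J := (RtoC om / m * (Cexp (c * RtoC (W - 0)) - Cexp (c * RtoC (- W - 0))))%C).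
  set (be := (RtoC 1 + RtoC (2 * W) / m)%C).
  set (Fin := fun P => (- J / m + be * Cexp (c * RtoC (P - 0)))%C).
  assert (HJ : J <> RtoC 0).
  { intros E. unfold J in E.
    assert (E2 : Cexp (c * RtoC (W - 0)) = Cexp (c * RtoC (- W - 0))).
    { apply Csub0. transitivity (/ (RtoC om / m) * (RtoC om / m * (Cexp (c * RtoC (W - 0)) - Cexp (c * RtoC (- W - 0)))))%C.
      field. auto. rewrite E. ring. }
    apply (f_equal Cmod) in E2. rewrite !Cmod_Cexp, !Re_mult_R in E2.
    apply exp_inj in E2. unfold c, cin in E2. rewrite Re_div_R in E2 by auto. rewrite HRe in E2.
    assert (E3 : -1 / om * (2 * W) = 0) by lra.
    apply Rmult_integral in E3. destruct E3 as [E3|E3]; [|lra].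
    assert (-1 / om * om = 0) by (rewrite E3; ring). field_simplify in H; auto. lra. }
  assert (DFin : forall P, is_derive Fin P ((m * Fin P + J) / RtoC om)%C).
  { intros P. unfold Fin. eapply is_deriveC_eq.
    apply C_deriv_plus. apply C_deriv_const. apply C_deriv_mult. apply C_deriv_const. apply Cexp_deriv.
    cbv beta. unfold c, cin. field. auto. }
  assert (IFin : is_RInt Fin (Ropp W) W J).
  { set (H := fun P => ((- J / m) * RtoC P + 0 + Cexp (c * RtoC (P - 0)) * (be * RtoC om / m))%C).
    assert (E : J = Cminus (H W) (H (- W))).
    { unfold H, be, J. rewrite !RtoC_mult, RtoC_opp. field. auto. }
    rewrite E. apply (is_RInt_derive (V := C_R_CompleteNormedModule) H Fin).
    - intros x _. unfold H. eapply is_deriveC_eq.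
      apply C_deriv_plus. apply C_deriv_lin. apply C_deriv_mult. apply Cexp_deriv. apply C_deriv_const.
      unfold Fin, c, cin. field. auto.
    - intros x _. eapply cont_of_derC. apply DFin. }
  assert (BFin : exists K2, forall P, - W <= P <= W -> Cmod (Fin P) <= K2).
  { apply compact_bound. intros x. eapply cont_of_derC. apply DFin. }
  destruct (classic ((m + 1)%C = RtoC 0)) as [Hm1|Hm1].
  - set (Fl := fun P => (J / RtoC om * RtoC P + (Fin (Ropp W) - J / RtoC om * RtoC (- W)))%C).
    set (Fr := fun P => (J / RtoC om * RtoC P + (Fin W - J / RtoC om * RtoC W))%C).
    assert (Hs : sol m om W (glue W Fl Fin Fr) J).
    { apply glue_sol; auto.
      - intros P. unfold Fl. eapply is_deriveC_eq. apply C_deriv_lin. rewrite Hm1. field. auto.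
      - intros P. unfold Fr. eapply is_deriveC_eq. apply C_deriv_lin. rewrite Hm1. field. auto.
      - unfold Fl. ring.
      - unfold Fr. ring.
      - apply glue_growth; auto.
        + exists (Cmod (J / RtoC om) + Cmod (Fin (Ropp W) - J / RtoC om * RtoC (- W))). intros P _.
          unfold Fl. eapply Rle_trans. apply Cmod_triangle. rewrite Cmod_mult, Cmod_R.
          pose proof (Cmod_ge_0 (J / RtoC om)). pose proof (Cmod_ge_0 (Fin (Ropp W) - J / RtoC om * RtoC (- W))).
          pose proof (Rabs_pos P). nra.
        + exists (Cmod (J / RtoC om) + Cmod (Fin W - J / RtoC om * RtoC W)). intros P _.
          unfold Fr. eapply Rle_trans. apply Cmod_triangle. rewrite Cmod_mult, Cmod_R.
          pose proof (Cmod_ge_0 (J / RtoC om)). pose proof (Cmod_ge_0 (Fin W - J / RtoC om * RtoC W)).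
          pose proof (Rabs_pos P). nra. }
    exists (glue W Fl Fin Fr), J. split; auto.
    destruct (classic (exists P, glue W Fl Fin Fr P <> RtoC 0)) as [H|H]; auto.
    exfalso. apply HJ. destruct Hs as [_ [_ [HI _]]]. apply (RInt_zero_fun _ _ _ _ HI).
    intros P. apply NNPP. intros HP. apply H. exists P. exact HP.
  - set (Fl := fun P => (- J / (m + 1) + Cexp (cout m om * RtoC (P - - W)) * (Fin (Ropp W) + J / (m + 1)))%C).
    set (Fr := fun P => (- J / (m + 1) + Cexp (cout m om * RtoC (P - W)) * (Fin W + J / (m + 1)))%C).
    assert (Hc0 : forall x, Cmod (Cexp (cout m om * RtoC x)) = 1).
    { intros x. rewrite Cmod_Cexp, Re_mult_R. unfold cout. rewrite Re_div_R by auto. rewrite Re_plus1, HRe.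
      replace ((-1 + 1) / om * x) with 0 by (field; auto). apply exp_0. }
    assert (Hs : sol m om W (glue W Fl Fin Fr) J).
    { apply glue_sol; auto.
      - intros P. unfold Fl. eapply is_deriveC_eq.
        apply C_deriv_plus. apply C_deriv_const. apply C_deriv_mult. apply Cexp_deriv. apply C_deriv_const.
        cbv beta. unfold cout. field. auto.
      - intros P. unfold Fr. eapply is_deriveC_eq.
        apply C_deriv_plus. apply C_deriv_const. apply C_deriv_mult. apply Cexp_deriv. apply C_deriv_const.
        cbv beta. unfold cout. field. auto.
      - unfold Fl. replace (- W - - W) with 0 by ring.
        replace (cout m om * RtoC 0)%C with (RtoC 0) by ring. rewrite Cexp_0. field. auto.
      - unfold Fr. replace (W - W) with 0 by ring.
        replace (cout m om * RtoC 0)%C with (RtoC 0) by ring. rewrite Cexp_0. field. auto.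
      - apply glue_growth; auto.
        + exists (Cmod (- J / (m + 1)) + Cmod (Fin (Ropp W) + J / (m + 1))). intros P _.
          unfold Fl. eapply Rle_trans. apply Cmod_triangle. rewrite Cmod_mult, Hc0.
          pose proof (Cmod_ge_0 (- J / (m + 1))). pose proof (Cmod_ge_0 (Fin (Ropp W) + J / (m + 1))).
          pose proof (Rabs_pos P). nra.
        + exists (Cmod (- J / (m + 1)) + Cmod (Fin W + J / (m + 1))). intros P _.
          unfold Fr. eapply Rle_trans. apply Cmod_triangle. rewrite Cmod_mult, Hc0.
          pose proof (Cmod_ge_0 (- J / (m + 1))). pose proof (Cmod_ge_0 (Fin W + J / (m + 1))).
          pose proof (Rabs_pos P). nra. }
    exists (glue W Fl Fin Fr), J. split; auto.
    destruct (classic (exists P, glue W Fl Fin Fr P <> RtoC 0)) as [H|H]; auto.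
    exfalso. apply HJ. destruct Hs as [_ [_ [HI _]]]. apply (RInt_zero_fun _ _ _ _ HI).
    intros P. apply NNPP. intros HP. apply H. exists P. exact HP.
Qed.

Lemma Re_m k t lam : Re (mm k t lam) = k * (t * Re lam) + k - 1.
Proof. destruct lam. unfold mm, Re, Cmult, Cplus, Cminus, Copp, RtoC; simpl. ring. Qed.

Lemma Re_tl t lam : Re (RtoC t * lam)%C = t * Re lam.
Proof. destruct lam. unfold Re, Cmult, RtoC; simpl. ring. Qed.

Lemma eig_iff kappa tau Omega W lam : kappa <> 0 ->
  (is_eigenvalue kappa tau Omega W lam <->
   exists Z I, sol (mm kappa tau lam) (kappa * tau * Omega) W Z I /\ exists P, Z P <> RtoC 0).
Proof.
  intros Hk. unfold is_eigenvalue, eigenfunction. split.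
  - intros [Z [HZ HP]]. apply (link _ _ _ _ _ _ Hk) in HZ. destruct HZ as [I HI].
    exists Z, I. auto.
  - intros [Z [I [HI HP]]]. exists Z. split; auto. apply (link _ _ _ _ _ _ Hk). exists I; auto.
Qed.

Lemma D_iff (D c L R : C) : D = (c * (L - R))%C -> c <> RtoC 0 -> (D = RtoC 0 <-> L = R).
Proof.
  intros E Hc. rewrite E. split; intros H.
  - apply Csub0. transitivity (/ c * (c * (L - R)))%C. field; auto. rewrite H. ring.
  - rewrite H. ring.
Qed.

Lemma Dchar_eq m om W e X Y : Cexp (cin m om * RtoC (W - e)) = X -> Cexp (cin m om * RtoC (- W - e)) = Y ->
  Dchar m om W e = (m * m * (m + 1) + RtoC (2 * W) * m * (m + 1) - RtoC om * (X - Y))%C.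
Proof. intros H1 H2. unfold Dchar. rewrite H1, H2. reflexivity. Qed.

Lemma Cexp_zero_arg m om : Cexp (cin m om * RtoC 0) = RtoC 1.
Proof. replace (cin m om * RtoC 0)%C with (RtoC 0) by ring. apply Cexp_0. Qed.

Lemma pos_div x y : 0 < x * y -> 0 < x / y.
Proof.
  intros H. assert (y <> 0) by (intros ->; lra).
  replace (x / y) with ((x * y) / (y * y)) by (field; auto).
  apply Rdiv_lt_0_compat; auto. assert (0 < y * y) by (apply Rlt_0_sqr; auto). lra.
Qed.

Lemma case_gen kappa tau Omega W lam e : 0 < kappa -> 0 < tau -> Omega <> 0 -> 0 < W ->
  (e = W \/ e = - W) -> 0 < e * (Re (mm kappa tau lam) + 1) / (kappa * tau * Omega) ->
  (is_eigenvalue kappa tau Omega W lam <->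
     (mm kappa tau lam <> RtoC 0 /\ Dchar (mm kappa tau lam) (kappa * tau * Omega) W e = RtoC 0)) /\
  (is_eigenvalue kappa tau Omega W lam ->
     simple_eigenvalue kappa tau Omega W lam /\
     forall Z, eigenfunction kappa tau Omega W lam Z -> bounded_fun Z).
Proof.
  intros Hk Ht HO HW He Hside.
  assert (Hk' : kappa <> 0) by lra.
  assert (Hom : kappa * tau * Omega <> 0).
  { apply Rmult_integral_contrapositive_currified; auto. apply Rmult_integral_contrapositive_currified; lra. }
  assert (Hm1 : (mm kappa tau lam + 1)%C <> RtoC 0).
  { intros E. assert (Re (mm kappa tau lam + RtoC 1)%C = 0) by (rewrite E; reflexivity).
    rewrite Re_plus1 in H. rewrite H in Hside. unfold Rdiv in Hside. rewrite Rmult_0_r, Rmult_0_l in Hside. lra. }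
  assert (Hcore := core_iff _ _ W e HW Hom Hm1 He Hside).
  split.
  - rewrite (eig_iff _ _ _ _ _ Hk'). exact Hcore.
  - intros Hev. rewrite (eig_iff _ _ _ _ _ Hk') in Hev.
    destruct (proj1 Hcore Hev) as [Hm _].
    destruct Hev as [Z0 [I0 [Hs0 HP0]]].
    destruct (core_simple _ _ W e HW Hom Hm1 He Hside Hm Z0 I0 Hs0 HP0) as [Hsimp Hbd].
    split.
    + exists Z0. split.
      * split; auto. apply (link _ _ _ _ _ _ Hk'). exists I0; auto.
      * intros Z HZ. apply (link _ _ _ _ _ _ Hk') in HZ. destruct HZ as [I HI]. eapply Hsimp; eauto.
    + intros Z [HZ _]. apply (link _ _ _ _ _ _ Hk') in HZ. destruct HZ as [I HI].
      destruct (Hbd Z I HI) as [M HM]. exists M; auto.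
Qed.

Lemma arg_pos kappa tau Omega W lam : kappa <> 0 -> tau <> 0 -> 0 < Omega ->
  (cin (mm kappa tau lam) (kappa * tau * Omega) * RtoC (W - - W))%C = char_arg kappa tau Omega W lam /\
  (cin (mm kappa tau lam) (kappa * tau * Omega) * RtoC (- W - W))%C = (- char_arg kappa tau Omega W lam)%C.
Proof.
  intros Hk Ht HO. assert (HO' : Omega <> 0) by lra.
  unfold cin, mm, char_arg. rewrite Rabs_right by lra.
  rewrite !RtoC_mult, !RtoC_minus, !RtoC_opp.
  split; field; repeat split; apply RtoC_neq; auto.
Qed.

Lemma arg_neg kappa tau Omega W lam : kappa <> 0 -> tau <> 0 -> Omega < 0 ->
  (cin (mm kappa tau lam) (kappa * tau * Omega) * RtoC (- W - W))%C = char_arg kappa tau Omega W lam /\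
  (cin (mm kappa tau lam) (kappa * tau * Omega) * RtoC (W - - W))%C = (- char_arg kappa tau Omega W lam)%C.
Proof.
  intros Hk Ht HO. assert (HO' : Omega <> 0) by lra.
  unfold cin, mm, char_arg. rewrite Rabs_left by lra.
  rewrite !RtoC_mult, !RtoC_minus, !RtoC_opp.
  split; field; repeat split; apply RtoC_neq; auto.
Qed.

Lemma D_rel kappa tau Omega W lam e L : kappa <> 0 -> tau <> 0 -> Omega <> 0 ->
  Dchar (mm kappa tau lam) (kappa * tau * Omega) W e =
   (mm kappa tau lam * mm kappa tau lam * (mm kappa tau lam + 1)
    + RtoC (2 * W) * mm kappa tau lam * (mm kappa tau lam + 1)
    - RtoC (kappa * tau * Rabs Omega) * L)%C ->
  Dchar (mm kappa tau lam) (kappa * tau * Omega) W e =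
   (- RtoC (kappa * tau * Rabs Omega) * (L - char_rhs kappa tau Omega W lam))%C.
Proof.
  intros Hk Ht HO H. rewrite H. unfold char_rhs, mm.
  assert (Ha : Rabs Omega <> 0) by (apply Rabs_no_R0; auto).
  rewrite !RtoC_mult. field. repeat split; apply RtoC_neq; auto.
Qed.

Lemma K_neq kappa tau Omega : kappa <> 0 -> tau <> 0 -> Omega <> 0 ->
  (- RtoC (kappa * tau * Rabs Omega))%C <> RtoC 0.
Proof.
  intros Hk Ht HO E. assert (Ha : Rabs Omega <> 0) by (apply Rabs_no_R0; auto).
  apply (f_equal fst) in E. simpl in E.
  assert (kappa * tau * Rabs Omega = 0) by lra.
  apply Rmult_integral in H. destruct H as [H|H]; [apply Rmult_integral in H; destruct H|]; auto.
Qed.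

Lemma side_lemma kappa tau Omega lam e s : 0 < kappa -> 0 < tau -> Omega <> 0 ->
  s = tau * Re lam + 1 -> 0 < e * s * Omega ->
  0 < e * (Re (mm kappa tau lam) + 1) / (kappa * tau * Omega).
Proof.
  intros Hk Ht HO Hs H. apply pos_div. rewrite Re_m.
  replace (e * (kappa * (tau * Re lam) + kappa - 1 + 1) * (kappa * tau * Omega))
    with ((e * s * Omega) * (kappa * kappa * tau)) by (rewrite Hs; ring).
  apply Rmult_lt_0_compat; auto. apply Rmult_lt_0_compat; auto. nra.
Qed.

Lemma m_zero_iff kappa tau lam : kappa <> 0 ->
  (mm kappa tau lam = RtoC 0 <-> (RtoC tau * lam)%C = RtoC ((1 - kappa) / kappa)).
Proof.
  intros Hk. assert (Hk' := RtoC_neq _ Hk).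
  assert (E : mm kappa tau lam = (RtoC kappa * ((RtoC tau * lam) - RtoC ((1 - kappa) / kappa)))%C).
  { unfold mm, Rdiv. rewrite RtoC_mult, RtoC_minus, RtoC_inv by auto. field. auto. }
  rewrite E. split; intros H.
  - apply Csub0. transitivity (/ RtoC kappa * (RtoC kappa * (RtoC tau * lam - RtoC ((1 - kappa) / kappa))))%C.
    field; auto. rewrite H. ring.
  - rewrite H. ring.
Qed.

Lemma trans_case kappa tau Omega W lam e X Y L : kappa <> 0 -> tau <> 0 -> Omega <> 0 ->
  Cexp (cin (mm kappa tau lam) (kappa * tau * Omega) * RtoC (W - e)) = X ->
  Cexp (cin (mm kappa tau lam) (kappa * tau * Omega) * RtoC (- W - e)) = Y ->
  (RtoC (kappa * tau * Omega) * (X - Y))%C = (RtoC (kappa * tau * Rabs Omega) * L)%C ->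
  (Dchar (mm kappa tau lam) (kappa * tau * Omega) W e = RtoC 0 <-> L = char_rhs kappa tau Omega W lam).
Proof.
  intros Hk Ht HO HX HY HL.
  apply (D_iff _ (- RtoC (kappa * tau * Rabs Omega))%C).
  - apply D_rel; auto. rewrite (Dchar_eq _ _ _ _ _ _ HX HY), HL. reflexivity.
  - apply K_neq; auto.
Qed.

Lemma Cexp_arg0 m om a b : a = b -> Cexp (cin m om * RtoC (a - b)) = RtoC 1.
Proof. intros ->. replace (b - b) with 0 by ring. apply Cexp_zero_arg. Qed.

Lemma prod3 a b c : 0 < a -> 0 < b -> 0 < c -> 0 < a * b * c.
Proof. intros. apply Rmult_lt_0_compat; [apply Rmult_lt_0_compat|]; auto. Qed.

Theorem theorem2p2 (kappa tau Omega W : R) :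
  0 < kappa < 1 -> 0 < tau -> Omega <> 0 -> 0 < W ->
  (* (i) *)
  (forall lam : C, Re (RtoC tau * lam)%C < -1 ->
     (is_eigenvalue kappa tau Omega W lam <->
      (Cexp (char_arg kappa tau Omega W lam) - RtoC 1)%C
        = char_rhs kappa tau Omega W lam)) /\
  (* (ii) continuous spectrum *)
  (forall lam : C, Re (RtoC tau * lam)%C = -1 ->
     is_eigenvalue kappa tau Omega W lam) /\
  (* (iii) *)
  (forall lam : C, Re (RtoC tau * lam)%C > -1 ->
     (is_eigenvalue kappa tau Omega W lam <->
      ((RtoC 1 - Cexp (- char_arg kappa tau Omega W lam))%C
         = char_rhs kappa tau Omega W lam /\
       (RtoC tau * lam)%C <> RtoC ((1 - kappa) / kappa)))) /\
  (* moreover: eigenvalues in (i),(iii) are simple with bounded eigenfunctions *)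
  (forall lam : C, Re (RtoC tau * lam)%C <> -1 ->
     is_eigenvalue kappa tau Omega W lam ->
     simple_eigenvalue kappa tau Omega W lam /\
     forall Z, eigenfunction kappa tau Omega W lam Z -> bounded_fun Z).
Proof.
  intros [Hk0 Hk1] Ht HO HW.
  assert (Hk : kappa <> 0) by lra. assert (Ht' : tau <> 0) by lra.
  assert (Hom : kappa * tau * Omega <> 0).
  { repeat apply Rmult_integral_contrapositive_currified; lra. }
  split; [|split; [|split]].
  -
    intros lam Hl. rewrite Re_tl in Hl.
    assert (Hm : mm kappa tau lam <> RtoC 0).
    { intros E. assert (Re (mm kappa tau lam) = 0) by (rewrite E; reflexivity).
      rewrite Re_m in H. nra. }
    destruct (Rle_lt_dec 0 Omega) as [HOp|HOn].
    + assert (HOp' : 0 < Omega) by lra.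
      destruct (arg_pos kappa tau Omega W lam Hk Ht' HOp') as [A1 A2].
      assert (Hp : 0 < - W * (tau * Re lam + 1) * Omega).
      { replace (- W * (tau * Re lam + 1) * Omega) with (W * (- (tau * Re lam + 1)) * Omega) by ring.
        apply prod3; lra. }
      assert (Hside := side_lemma kappa tau Omega lam (- W) (tau * Re lam + 1) Hk0 Ht HO eq_refl Hp).
      rewrite (proj1 (case_gen kappa tau Omega W lam (- W) Hk0 Ht HO HW (or_intror eq_refl) Hside)).
      rewrite (trans_case kappa tau Omega W lam (- W) (Cexp (char_arg kappa tau Omega W lam)) (RtoC 1)
                 (Cexp (char_arg kappa tau Omega W lam) - RtoC 1)%C Hk Ht' HO).
      * split; [intros [_ H]; exact H| intros H; split; auto].
      * rewrite A1. reflexivity.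
      * apply Cexp_arg0. ring.
      * rewrite Rabs_right by lra. reflexivity.
    + destruct (arg_neg kappa tau Omega W lam Hk Ht' HOn) as [A1 A2].
      assert (Hp : 0 < W * (tau * Re lam + 1) * Omega).
      { replace (W * (tau * Re lam + 1) * Omega) with (W * (- (tau * Re lam + 1)) * (- Omega)) by ring.
        apply prod3; lra. }
      assert (Hside := side_lemma kappa tau Omega lam W (tau * Re lam + 1) Hk0 Ht HO eq_refl Hp).
      rewrite (proj1 (case_gen kappa tau Omega W lam W Hk0 Ht HO HW (or_introl eq_refl) Hside)).
      rewrite (trans_case kappa tau Omega W lam W (RtoC 1) (Cexp (char_arg kappa tau Omega W lam))
                 (Cexp (char_arg kappa tau Omega W lam) - RtoC 1)%C Hk Ht' HO).
      * split; [intros [_ H]; exact H| intros H; split; auto].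
      * apply Cexp_arg0. ring.
      * rewrite A1. reflexivity.
      * rewrite Rabs_left by lra. rewrite !RtoC_mult, RtoC_opp. ring.
  -
    intros lam Hl. rewrite Re_tl in Hl.
    apply (eig_iff _ _ _ _ _ Hk). apply cont_spec; auto.
    rewrite Re_m. nra.
  -
    intros lam Hl. rewrite Re_tl in Hl.
    rewrite <- (m_zero_iff kappa tau lam Hk).
    destruct (Rle_lt_dec 0 Omega) as [HOp|HOn].
    + assert (HOp' : 0 < Omega) by lra.
      destruct (arg_pos kappa tau Omega W lam Hk Ht' HOp') as [A1 A2].
      assert (Hp : 0 < W * (tau * Re lam + 1) * Omega) by (apply prod3; lra).
      assert (Hside := side_lemma kappa tau Omega lam W (tau * Re lam + 1) Hk0 Ht HO eq_refl Hp).
      rewrite (proj1 (case_gen kappa tau Omega W lam W Hk0 Ht HO HW (or_introl eq_refl) Hside)).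
      rewrite (trans_case kappa tau Omega W lam W (RtoC 1) (Cexp (- char_arg kappa tau Omega W lam))
                 (RtoC 1 - Cexp (- char_arg kappa tau Omega W lam))%C Hk Ht' HO).
      * tauto.
      * apply Cexp_arg0. ring.
      * rewrite A2. reflexivity.
      * rewrite Rabs_right by lra. reflexivity.
    + destruct (arg_neg kappa tau Omega W lam Hk Ht' HOn) as [A1 A2].
      assert (Hp : 0 < - W * (tau * Re lam + 1) * Omega).
      { replace (- W * (tau * Re lam + 1) * Omega) with (W * (tau * Re lam + 1) * (- Omega)) by ring.
        apply prod3; lra. }
      assert (Hside := side_lemma kappa tau Omega lam (- W) (tau * Re lam + 1) Hk0 Ht HO eq_refl Hp).
      rewrite (proj1 (case_gen kappa tau Omega W lam (- W) Hk0 Ht HO HW (or_intror eq_refl) Hside)).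
      rewrite (trans_case kappa tau Omega W lam (- W) (Cexp (- char_arg kappa tau Omega W lam)) (RtoC 1)
                 (RtoC 1 - Cexp (- char_arg kappa tau Omega W lam))%C Hk Ht' HO).
      * tauto.
      * rewrite A2. reflexivity.
      * apply Cexp_arg0. ring.
      * rewrite Rabs_left by lra. rewrite !RtoC_mult, RtoC_opp. ring.
  -
    intros lam Hl Hev. rewrite Re_tl in Hl.
    assert (Hs0 : tau * Re lam + 1 <> 0) by lra.
    destruct (Rle_lt_dec 0 ((tau * Re lam + 1) * Omega)) as [Hp|Hn].
    + assert (Hp' : 0 < W * (tau * Re lam + 1) * Omega).
      { destruct Hp as [Hp|Hp].
        - replace (W * (tau * Re lam + 1) * Omega) with (W * ((tau * Re lam + 1) * Omega)) by ring.
          apply Rmult_lt_0_compat; lra.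
        - exfalso. symmetry in Hp. apply Rmult_integral in Hp. tauto. }
      assert (Hside := side_lemma kappa tau Omega lam W (tau * Re lam + 1) Hk0 Ht HO eq_refl Hp').
      exact (proj2 (case_gen kappa tau Omega W lam W Hk0 Ht HO HW (or_introl eq_refl) Hside) Hev).
    + assert (Hp' : 0 < - W * (tau * Re lam + 1) * Omega).
      { replace (- W * (tau * Re lam + 1) * Omega) with (W * (- ((tau * Re lam + 1) * Omega))) by ring.
        apply Rmult_lt_0_compat; lra. }
      assert (Hside := side_lemma kappa tau Omega lam (- W) (tau * Re lam + 1) Hk0 Ht HO eq_refl Hp').
      exact (proj2 (case_gen kappa tau Omega W lam (- W) Hk0 Ht HO HW (or_intror eq_refl) Hside) Hev).
Qed.
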